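(* Every compact ultrametric space $(X,d)$ is $1$-monotone, i.e. there exists a linear order $<$ on $X$ such that $\operatorname{diam}(\{x\in X: a\le x\le b\})\le d(a,b)$ for all $a,b\in X$.
   Context: An ultrametric space is a metric space $(X,d)$ satisfying $d(x,y)\le\max(d(x,z),d(y,z))$ for all $x,y,z\in X$. A metric space is $C$-monotone if there is a linear order $<$ on it with $\operatorname{diam}([a,b])\le C\,d(a,b)$ for all $a,b$, where $[a,b]=\{x: a\le x\le b\}$. *)

(* Defs.v *)
From Stdlib Require Import Reals List.
Open Scope R_scope.

Definition is_metric {X : Type} (d : X -> X -> R) : Prop :=
  (forall x y, 0 <= d x y) /\
  (forall x y, d x y = 0 <-> x = y) /\
  (forall x y, d x y = d y x) /\
  (forall x y z, d x z <= d x y + d y z).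

Definition is_ultrametric {X : Type} (d : X -> X -> R) : Prop :=
  is_metric d /\ forall x y z, d x y <= Rmax (d x z) (d y z).

Definition metric_open {X : Type} (d : X -> X -> R) (U : X -> Prop) : Prop :=
  forall x, U x -> exists r, 0 < r /\ forall y, d x y < r -> U y.

Definition metric_compact {X : Type} (d : X -> X -> R) : Prop :=
  forall (I : Type) (U : I -> X -> Prop),
    (forall i, metric_open d (U i)) ->
    (forall x, exists i, U i x) ->
    exists l : list I, forall x, exists i, In i l /\ U i x.

Definition linear_order {X : Type} (le : X -> X -> Prop) : Prop :=
  (forall x, le x x) /\
  (forall x y, le x y -> le y x -> x = y) /\
  (forall x y z, le x y -> le y z -> le x z) /\
  (forall x y, le x y \/ le y x).

Definition interval {X : Type} (le : X -> X -> Prop) (a b : X) : X -> Prop :=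
  fun x => le a x /\ le x b.

Definition diam_le {X : Type} (d : X -> X -> R) (S : X -> Prop) (r : R) : Prop :=
  forall x y, S x -> S y -> d x y <= r.

Definition monotone_space {X : Type} (d : X -> X -> R) (C : R) : Prop :=
  exists le : X -> X -> Prop, linear_order le /\
    forall a b, diam_le d (interval le a b) (C * d a b).

(* Main.v *)
Require Import Defs.
From Stdlib Require Import Reals.
From Stdlib Require Import Lra Lia List IndefiniteDescription Classical.
Open Scope R_scope.

Fixpoint fidx {X : Type} (d : X -> X -> R) (r : R) (l : list X) (x : X) : nat :=
  match l with
  | nil => 0%nat
  | c :: l' => if Rlt_dec (d c x) r then 0%nat else S (fidx d r l' x)
  end.

Lemma max_le (a b c : R) : a <= Rmax b c -> a <= b \/ a <= c.
Proof. unfold Rmax; destruct (Rle_dec b c); auto. Qed.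

Section S.
Variable X : Type.
Variable d : X -> X -> R.
Hypothesis d0 : forall x y, 0 <= d x y.
Hypothesis deq : forall x y, d x y = 0 <-> x = y.
Hypothesis dsym : forall x y, d x y = d y x.
Hypothesis dtri : forall x y z, d x z <= d x y + d y z.
Hypothesis dum : forall x y z, d x y <= Rmax (d x z) (d y z).

Lemma um_lt x y z r : d x z < r -> d y z < r -> d x y < r.
Proof. intros; destruct (max_le _ _ _ (dum x y z)); lra. Qed.

Lemma fidx_eq_of r l x y : d x y < r -> fidx d r l x = fidx d r l y.
Proof.
  intro H; induction l as [|c l IH]; simpl; auto.
  destruct (Rlt_dec (d c x) r), (Rlt_dec (d c y) r); auto.
  - exfalso; apply n; apply um_lt with x; auto. rewrite dsym; auto.
  - exfalso; apply n; apply um_lt with y; auto.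
Qed.

Lemma fidx_eq_to (r : R) (l : list X) (x y : X) : (exists c, In c l /\ d c x < r) ->
  fidx d r l x = fidx d r l y -> d x y < r.
Proof.
  induction l as [|c l IH]; simpl.
  - intros [c [[] _]].
  - intros [c' [Hin Hc']].
    destruct (Rlt_dec (d c x) r), (Rlt_dec (d c y) r); intro E; try discriminate.
    + apply um_lt with c; rewrite dsym; auto.
    + apply IH; [|lia]. destruct Hin as [->|Hin]; [contradiction|eauto].
Qed.

Lemma dpos x y : x <> y -> 0 < d x y.
Proof. intro H; destruct (d0 x y); auto. exfalso; apply H, deq; auto. Qed.

Lemma iso x y z : d x y < d x z -> d y z = d x z.
Proof.
  intro H. apply Rle_antisym.
  - destruct (max_le _ _ _ (dum y z x)); rewrite ?(dsym y x), ?(dsym z x) in *; lra.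
  - destruct (max_le _ _ _ (dum x z y)); rewrite ?(dsym z y) in *; lra.
Qed.

End S.

Theorem lemma2p3 (X : Type) (d : X -> X -> R) :
  is_ultrametric d -> metric_compact d -> monotone_space d 1.
Proof.
  intros [[d0 [deq [dsym dtri]]] dum] Hc.
  assert (cov : forall r, exists l : list X, 0 < r ->
            forall x, exists c, In c l /\ d c x < r).
  { intro r. destruct (Rlt_dec 0 r) as [Hr|Hr].
    - destruct (Hc X (fun c y => d c y < r)) as [l Hl].
      + intros c y Hy. exists (r - d c y). split; [lra|].
        intros z Hz. pose proof (dtri c y z). lra.
      + intro x. exists x. assert (d x x = 0) by (apply deq; auto). lra.
      + exists l. intros _ x. destruct (Hl x) as [i [Hi Hu]]. eauto.
    - exists nil. intros; lra. }
  set (L := fun r => proj1_sig (constructive_indefinite_description _ (cov r))).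
  assert (HL : forall r, 0 < r -> forall x, exists c, In c (L r) /\ d c x < r).
  { intro r. unfold L. destruct (constructive_indefinite_description _ (cov r)); auto. }
  set (key := fun r x => fidx d r (L r) x).
  assert (Kiff : forall r x y, 0 < r -> (key r x = key r y <-> d x y < r)).
  { intros r x y Hr; split; intro H.
    - eapply (fidx_eq_to X d dsym dum); eauto.
    - eapply (fidx_eq_of X d dsym dum); eauto. }
  assert (dpos' : forall x y, x <> y -> 0 < d x y) by (intros; eapply dpos; eauto).
  assert (dxx : forall x, d x x = 0) by (intro; apply deq; auto).
  assert (iso' : forall x y z, d x y < d x z -> d y z = d x z)
    by (intros; eapply iso; eauto).
  set (lt := fun x y => x <> y /\ (key (d x y) x < key (d x y) y)%nat).
  assert (ltE : forall x y, lt x y -> x <> y /\ (key (d x y) x < key (d x y) y)%nat) by auto.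
  assert (trich : forall x y, x <> y -> lt x y \/ lt y x).
  { intros x y H. assert (key (d x y) x <> key (d x y) y).
    { intro E. apply Kiff in E; [lra|auto]. }
    destruct (proj1 (Nat.lt_gt_cases (key (d x y) x) (key (d x y) y)) H0); [left; split; auto|].
    right; split; auto. rewrite (dsym y x); lia. }
  assert (asym : forall x y, lt x y -> lt y x -> False).
  { intros x y [_ H1] [_ H2]. rewrite (dsym y x) in H2. lia. }
  assert (eqk : forall r x y, 0 < r -> d x y < r -> key r x = key r y)
    by (intros; apply Kiff; auto).
  assert (trans : forall x y z, lt x y -> lt y z -> lt x z).
  { intros x y z [Hxy H1] [Hyz H2].
    assert (P1 := dpos' _ _ Hxy). assert (P2 := dpos' _ _ Hyz).
    destruct (Rtotal_order (d x y) (d y z)) as [Hl|[He|Hg]].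
    - assert (E : d x z = d y z).
      { apply (iso' y x z). rewrite dsym; lra. }
      assert (key (d y z) x = key (d y z) y) by (apply eqk; auto).
      split; [intros ->; rewrite dxx in E; lra|]. rewrite E; lia.
    - rewrite He in H1.
      destruct (Rtotal_order (d x z) (d y z)) as [A|[A|A]].
      + destruct (Req_dec (d x z) 0) as [Z|Z].
        * apply deq in Z; subst. exfalso; lia.
        * assert (key (d y z) x = key (d y z) z) by (apply eqk; auto). lia.
      + split; [intros ->; rewrite dxx in A; lra|]. rewrite A; lia.
      + exfalso. destruct (max_le _ _ _ (dum x z y)); rewrite ?(dsym z y) in *; lra.
    - assert (E : d x z = d x y).
      { destruct (Rtotal_order (d x z) (d x y)) as [A|[A|A]]; auto.
        - exfalso. destruct (max_le _ _ _ (dum x y z)); rewrite ?(dsym y z) in *; lra.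
        - exfalso. destruct (max_le _ _ _ (dum x z y)); rewrite ?(dsym z y) in *; lra. }
      assert (key (d x y) y = key (d x y) z) by (apply eqk; auto).
      split; [intros ->; rewrite dxx in E; lra|]. rewrite E; lia. }
  exists (fun x y => x = y \/ lt x y). split.
  - split; [auto|]. split; [|split].
    + intros x y [->|A] [E|B]; auto. exfalso; eauto.
    + intros x y z [->|A] [<-|B]; auto. right; eauto.
    + intros x y. destruct (classic (x = y)); [left; left; auto|].
      destruct (trich x y); auto.
  - assert (conv : forall a x b, (a = x \/ lt a x) -> (x = b \/ lt x b) ->
               d a x <= d a b /\ d x b <= d a b).
    { intros a x b Hax Hxb. split.
      - destruct (Rle_lt_dec (d a x) (d a b)) as [|C]; auto. exfalso. pose proof (d0 a b) as Dab.
        destruct Hax as [<-|[_ K1]]; [rewrite dxx in C; lra|].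
        destruct Hxb as [<-|[_ K2]]; [lra|].
        assert (E : d b x = d a x) by (apply iso'; auto).
        assert (key (d a x) a = key (d a x) b)
          by (apply eqk; [lra|auto]).
        rewrite (dsym x b), E in K2. lia.
      - destruct (Rle_lt_dec (d x b) (d a b)) as [|C]; auto. exfalso. pose proof (d0 a b) as Dab.
        destruct Hxb as [<-|[_ K2]]; [rewrite dxx in C; lra|].
        destruct Hax as [<-|[_ K1]]; [lra|].
        assert (E : d a x = d b x) by (apply iso'; rewrite (dsym b a), (dsym b x); auto).
        assert (key (d x b) a = key (d x b) b)
          by (apply eqk; [lra|auto]).
        rewrite E, (dsym b x) in K1. lia. }
    intros a b x y [Hx1 Hx2] [Hy1 Hy2].
    destruct (conv a x b Hx1 Hx2) as [A1 _]. destruct (conv a y b Hy1 Hy2) as [B1 _].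
    destruct (max_le _ _ _ (dum x y a)); rewrite ?(dsym x a), ?(dsym y a) in *; lra.
Qed.
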